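(* Let $X$ be a one-sided subshift with $\sigma(X)=X$ such that $Sp_l(X,\sigma)$ is finite. Then \[Sp_l(\widetilde{X},\sigma_{\widetilde{X}})=\imath(Sp_l(X,\sigma)),\] and consequently $|Sp_l(\widetilde{X},\sigma_{\widetilde{X}})|=|Sp_l(X,\sigma)|$.
   Context: $X\subseteq\mathcal{A}^{\mathbb{N}}$ is a closed shift-invariant set over a finite alphabet $\mathcal{A}$, $\sigma$ the left shift. For a continuous map $T$ on a space $Y$, $Sp_l(Y,T)=\{y: |T^{-1}(\{y\})|\ge 2\}$. The cover: for $x\in X$ and $l\ge0$ let $P_l(x)=\{\mu\in\mathcal{L}(X): |\mu|=l,\ \mu x\in X\}$. Let $\mathcal{I}=\{(k,l)\in\mathbb{N}^2: k\le l\}$, ordered by $(k,l)\preceq(k',l')$ iff $k\le k'$ and $l-k\le l'-k'$. For $(k,l)\in\mathcal{I}$ write $x\overset{k,l}{\sim}y$ iff $x_{[0,k)}=y_{[0,k)}$ and $P_l(\sigma^k(x))=P_l(\sigma^k(y))$; let ${}_kX_l=X/\overset{k,l}{\sim}$ (a finite discrete set) with classes ${}_k[x]_l$. For $(k,l)\preceq(k',l')$ the map ${}_{k'}[x]_{l'}\mapsto{}_k[x]_l$ is well defined, and $\widetilde{X}$ is the projective limit of the system $({}_kX_l)_{(k,l)\in\mathcal{I}}$ with these maps: a point is $\tilde{x}=(\tilde{x}_{(k,l)})_{(k,l)\in\mathcal{I}}$ with $\tilde{x}_{(k,l)}\in{}_kX_l$ compatible with the bonding maps, with the projective limit topology. The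 shift $\sigma_{\widetilde{X}}$ is given by $\sigma_{\widetilde{X}}(\tilde{x})_{(k,l)}={}_k[\sigma(z)]_l$ where $z\in X$ is any representative of $\tilde{x}_{(k+1,l+1)}$. The map $\imath:X\to\widetilde{X}$ is $\imath(x)=({}_k[x]_l)_{(k,l)\in\mathcal{I}}$ (injective). $\sigma_{\widetilde{X}}$ is a surjective local homeomorphism of the compact zero-dimensional metrizable space $\widetilde{X}$. *)

(* Defs.v *)
From HB Require Import structures.
From mathcomp Require Import all_boot.
From mathcomp Require Import boolp classical_sets cardinality.
Set Implicit Arguments. Unset Strict Implicit. Unset Printing Implicit Defensive.
Local Open Scope classical_set_scope.

Section Defs.
Variable A : finType.
Notation seqA := (nat -> A).

Definition shift (x : seqA) : seqA := fun n => x n.+1.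
Definition shiftn (k : nat) (x : seqA) : seqA := fun n => x (n + k).

Definition wcat (mu : seq A) (x : seqA) : seqA :=
  fun n => if n < size mu then nth (x 0) mu n else x (n - size mu).

(* X is closed in the product topology of A^N (A discrete): a sequence all of
   whose prefixes are prefixes of points of X belongs to X. *)
Definition closed_seqset (X : set seqA) : Prop :=
  forall x, (forall n, exists y, X y /\ forall i, i < n -> y i = x i) -> X x.

Definition lang (X : set seqA) : set (seq A) :=
  [set mu | exists y, X y /\ exists j, forall i, i < size mu -> nth (y 0) mu i = y (i + j)].

Definition Pl (X : set seqA) (l : nat) (x : seqA) : set (seq A) :=
  [set mu | lang X mu /\ size mu = l /\ X (wcat mu x)].

Definition kl_equiv (X : set seqA) (k l : nat) (x y : seqA) : Prop :=
  (forall i, i < k -> x i = y i) /\ Pl X l (shiftn k x) = Pl X l (shiftn k y).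

Definition cls (X : set seqA) (k l : nat) (x : seqA) : set seqA :=
  [set y | X y /\ kl_equiv X k l x y].

(* Points of the projective limit. The index set I = {(k,l) : k <= l} with
   (k,l) <= (k',l') iff k <= k' and l-k <= l'-k' is reindexed bijectively and
   order-isomorphically by (k,d) = (k, l-k) in N x N with the product order.
   A point is the family  xt k d = class at index (k, k+d). *)
Definition tpoint := nat -> nat -> set seqA.

Definition Xt (X : set seqA) : set tpoint :=
  [set xt | (forall k d, exists z, X z /\ xt k d = cls X k (k + d) z) /\
            (forall k d k' d', k <= k' -> d <= d' ->
               forall z, xt k' d' z -> xt k d = cls X k (k + d) z)].

Definition sigmat (X : set seqA) (xt : tpoint) : tpoint :=
  fun k d => [set y | exists z, xt k.+1 d z /\ cls X k (k + d) (shift z) y].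

Definition imath (X : set seqA) (x : seqA) : tpoint :=
  fun k d => cls X k (k + d) x.
End Defs.

Definition Spl {T : Type} (Y : set T) (f : T -> T) : set T :=
  [set y | Y y /\ exists x1 x2, Y x1 /\ Y x2 /\ x1 <> x2 /\ f x1 = y /\ f x2 = y].

(* Main.v *)
Require Import Defs.
From mathcomp Require Import all_boot.
From mathcomp Require Import boolp classical_sets cardinality.
From mathcomp Require Import zify.
Set Implicit Arguments. Unset Strict Implicit. Unset Printing Implicit Defensive.
Local Open Scope classical_set_scope.
Local Open Scope card_scope.

Section W.
Variable A : finType.
Implicit Types (x y z w v : nat -> A) (mu nu : seq A).

Lemma wcat_cat mu nu x : wcat mu (wcat nu x) = wcat (mu ++ nu) x.
Proof.
apply: funext => n; rewrite /wcat size_cat nth_cat.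
case: ltnP => h1.
  rewrite ltn_addr //; exact: set_nth_default.
case: ltnP => h2.
  by rewrite ifT //; lia.
by rewrite ifF ?subnDA //; apply/negbTE; lia.
Qed.

Lemma shiftn_wcat mu x : shiftn (size mu) (wcat mu x) = x.
Proof.
apply: funext => n; rewrite /shiftn /wcat ifF ?addnK //.
by apply/negbTE; rewrite -leqNgt leq_addl.
Qed.

Lemma wcat_shiftn z k : wcat (mkseq z k) (shiftn k z) = z.
Proof.
apply: funext => n; rewrite /wcat /shiftn size_mkseq.
case: ltnP => h; first by rewrite nth_mkseq.
by rewrite subnK.
Qed.

Lemma shiftn_shift k z : shiftn k (shift z) = shiftn k.+1 z.
Proof. by apply: funext => n; rewrite /shiftn /shift addnS. Qed.

Lemma shiftn_S k z : shiftn k z = wcat [:: z k] (shiftn k.+1 z).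
Proof.
apply: funext => -[|n]; rewrite /wcat /shiftn //=.
by rewrite subn1 /= addnS.
Qed.

Lemma shift_wcat1 a w : shift (wcat [:: a] w) = w.
Proof. by apply: funext => n; rewrite /shift /wcat /= subn1. Qed.

Lemma wcat_shift z : wcat [:: z 0] (shift z) = z.
Proof. by apply: funext => -[|n]; rewrite /shift /wcat //= subn1. Qed.

Lemma shiftnS' k z : shiftn k.+1 z = shift (shiftn k z).
Proof. by apply: funext => n; rewrite /shiftn /shift addSnnS. Qed.

End W.

Section P.
Variable A : finType.
Variable X : set (nat -> A).
Hypothesis hsurj : (@shift A) @` X = X.
Implicit Types (x y z w v : nat -> A) (mu nu : seq A).

Definition PP l v : set (seq A) := [set mu | size mu = l /\ X (wcat mu v)].

Lemma PlE l v : Pl X l v = PP l v.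
Proof.
apply/seteqP; split => mu /=; first by case=> _ [].
case=> h1 h2; split => //; exists (wcat mu v); split => //; exists 0 => i hi.
rewrite addn0 /wcat hi; exact: set_nth_default.
Qed.

Lemma X_shift x : X x -> X (shift x).
Proof. by move=> hx; rewrite -hsurj; exists x. Qed.

Lemma X_shiftn k x : X x -> X (shiftn k x).
Proof.
move=> hx; elim: k => [|k IH].
  by have -> : shiftn 0 x = x by apply: funext => n; rewrite /shiftn addn0.
rewrite shiftnS'; exact: X_shift.
Qed.

Lemma X_ext n y : X y -> exists nu, size nu = n /\ X (wcat nu y).
Proof.
move=> hy; elim: n => [|n [nu [hs hn]]].
  exists [::]; split => //; by have -> : wcat [::] y = y by apply: funext => m; rewrite /wcat subn0.
have : X (wcat nu y) by [].
rewrite -{1}hsurj => -[p hp hpe].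
exists (p 0 :: nu); split; first by rewrite /= hs.
by rewrite -cat1s -wcat_cat -hpe wcat_shift.
Qed.

Lemma Psfx l l' v mu : l <= l' -> X v ->
  (PP l v mu <-> exists nu, size nu = l' - l /\ PP l' v (nu ++ mu)).
Proof.
move=> hl hv; split.
  case=> hs hx; have [nu [hnu hnx]] := X_ext (l' - l) hx.
  exists nu; split => //; split; first by rewrite size_cat hnu hs subnK.
  by rewrite -wcat_cat.
case=> nu [hnu [hs hx]]; split.
  by move: hs; rewrite size_cat hnu; lia.
by rewrite -wcat_cat in hx; rewrite -(shiftn_wcat nu (wcat mu v)); exact: X_shiftn.
Qed.

Lemma Pdown l l' v v' : l <= l' -> X v -> X v' -> PP l' v = PP l' v' -> PP l v = PP l v'.
Proof.
move=> hl hv hv' he; apply: funext => mu; apply: propext.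
rewrite (Psfx _ hl hv) (Psfx _ hl hv') he; done.
Qed.

Lemma Pcat1 l a v mu : PP l (wcat [:: a] v) mu <-> PP l.+1 v (mu ++ [:: a]).
Proof.
rewrite /PP /= wcat_cat size_cat /=; split; case=> h1 h2; split => //; lia.
Qed.

End P.

Section K.
Variable A : finType.
Variable X : set (nat -> A).
Hypothesis hsurj : (@shift A) @` X = X.
Implicit Types (x y z w v : nat -> A) (mu nu : seq A).

Lemma klE k l z w : kl_equiv X k l z w <->
  (forall i, i < k -> z i = w i) /\ PP X l (shiftn k z) = PP X l (shiftn k w).
Proof. by rewrite /kl_equiv !PlE. Qed.

Lemma kl_refl k l z : kl_equiv X k l z z.
Proof. by []. Qed.

Lemma kl_sym k l z w : kl_equiv X k l z w -> kl_equiv X k l w z.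
Proof. by case=> h1 h2; split => // i hi; rewrite h1. Qed.

Lemma kl_trans k l z w u : kl_equiv X k l z w -> kl_equiv X k l w u -> kl_equiv X k l z u.
Proof. by case=> h1 h2 [h3 h4]; split; [move=> i hi; rewrite h1 ?h3|rewrite h2]. Qed.

Lemma kl_step1 k d z w : kl_equiv X k.+1 (k.+1 + d) z w -> kl_equiv X k (k + d) z w.
Proof.
move/klE=> [h1 h2]; apply/klE; split; first by move=> i hi; apply: h1; lia.
rewrite (shiftn_S k z) (shiftn_S k w) h1 //.
apply: funext => mu; apply: propext; rewrite !Pcat1 -addSn h2; done.
Qed.

Lemma kl_stepd k d d' z w : X z -> X w -> kl_equiv X k (k + d') z w -> d <= d' ->
  kl_equiv X k (k + d) z w.
Proof.
move=> hz hw /klE [h1 h2] hd; apply/klE; split => //.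
apply: (Pdown hsurj _ _ _ h2); rewrite ?leq_add2l //; exact: X_shiftn.
Qed.

Lemma kl_compat k d k' d' z w : X z -> X w -> kl_equiv X k' (k' + d') z w ->
  k <= k' -> d <= d' -> kl_equiv X k (k + d) z w.
Proof.
move=> hz hw h hk hd; have := kl_stepd hz hw h hd.
rewrite -(subnKC hk); elim: (k' - k) => [|n IH]; first by rewrite addn0.
by rewrite addnS => /kl_step1.
Qed.

Lemma kl_shift k d z w : X z -> X w -> kl_equiv X k.+1 (k.+1 + d) z w ->
  kl_equiv X k (k + d) (shift z) (shift w).
Proof.
move=> hz hw /klE [h1 h2]; apply/klE; split; first by move=> i hi; apply: h1.
rewrite !shiftn_shift; apply: (Pdown hsurj _ _ _ h2); rewrite ?addSn //; exact: X_shiftn.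
Qed.

Lemma cls_self k l z : X z -> cls X k l z z.
Proof. by []. Qed.

Lemma cls_eq k l z w : kl_equiv X k l z w -> cls X k l z = cls X k l w.
Proof.
move=> h; apply/seteqP; split => y [hy h'].
  by split => //; apply: kl_trans (kl_sym h) h'.
by split => //; apply: kl_trans h h'.
Qed.

Section T.
Variable xt : tpoint A.
Hypothesis hxt : Xt X xt.

Lemma Xt_cls k d z : xt k d z -> xt k d = cls X k (k + d) z.
Proof. by move=> h; case: hxt => _ H; apply: (H k d k d). Qed.

Lemma Xt_X k d z : xt k d z -> X z.
Proof. by move=> h; move: (h); rewrite (Xt_cls h) => -[]. Qed.

Lemma Xt_ne k d : exists z, xt k d z.
Proof. by case: hxt => H _; have [z [hz ->]] := H k d; exists z. Qed.

Lemma Xt_down k d k' d' z : xt k' d' z -> k <= k' -> d <= d' -> xt k d z.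
Proof.
move=> h hk hd; case: hxt => _ H; rewrite (H k d k' d' hk hd z h).
exact: cls_self (Xt_X h).
Qed.

Lemma Xt_same k d z w : xt k d z -> xt k d w -> kl_equiv X k (k + d) z w.
Proof. by move=> hz; rewrite (Xt_cls hz) => -[]. Qed.

Lemma Xt_agree k d k' d' z w i : xt k d z -> xt k' d' w -> i < k -> i < k' -> z i = w i.
Proof.
move=> hz hw hi hi'.
have hz' : xt i.+1 0 z by apply: Xt_down hz _ _.
have hw' : xt i.+1 0 w by apply: Xt_down hw _ _.
by case: (Xt_same hz' hw') => h _; apply: h.
Qed.

Lemma Xt_lim (hclosed : closed_seqset X) :
  exists x, X x /\ forall k d z i, xt k d z -> i < k -> z i = x i.
Proof.
have [f hf] := choice (fun n => Xt_ne n.+1 0).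
have key : forall k d z i, xt k d z -> i < k -> z i = f i i.
  by move=> k d z i hz hi; apply: Xt_agree hz (hf i) hi _.
exists (fun n => f n n); split => //.
apply: hclosed => n; have [z hz] := Xt_ne n 0.
exists z; split; first exact: Xt_X hz.
by move=> i hi; apply: key hz hi.
Qed.

Lemma sigmat_rep k d z : xt k.+1 d z -> sigmat X xt k d = cls X k (k + d) (shift z).
Proof.
move=> hz; apply/seteqP; split => y.
  case=> z' [hz' hy]; rewrite (cls_eq (kl_shift (Xt_X hz) (Xt_X hz') (Xt_same hz hz'))).
  done.
by move=> hy; exists z.
Qed.

End T.

Lemma imath_Xt x : X x -> Xt X (imath X x).
Proof.
move=> hx; split; first by move=> k d; exists x.
move=> k d k' d' hk hd z [hz he]; apply: cls_eq; exact: kl_compat hx hz he hk hd.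
Qed.

Lemma sigmat_imath x : X x -> sigmat X (imath X x) = imath X (shift x).
Proof.
move=> hx; apply: funext => k; apply: funext => d.
by rewrite (sigmat_rep (imath_Xt hx) (z := x)).
Qed.

Lemma imath_inj x y : X x -> X y -> imath X x = imath X y -> x = y.
Proof.
move=> hx hy he; apply: funext => i.
have : imath X y i.+1 0 y by [].
rewrite -he => -[_ [h _]]; exact: h.
Qed.

End K.

Lemma eq_in_mkseq (T : Type) (f g : nat -> T) n :
  (forall i, i < n -> f i = g i) -> mkseq f n = mkseq g n.
Proof.
move=> h; rewrite /mkseq; apply/eq_in_map => i; rewrite mem_iota add0n => /andP[_ hi].
exact: h.
Qed.

Lemma foldr_maxn_ge (s : seq nat) i : i \in s -> i <= foldr maxn 0 s.
Proof.
elim: s => //= a s IH; rewrite in_cons => /orP[/eqP ->|/IH h]; first exact: leq_maxl.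
by apply: leq_trans h (leq_maxr _ _).
Qed.

Lemma fin_sep (A : finType) (S : set (nat -> A)) x : finite_set S ->
  exists K, forall w, S w -> (forall i, i < K -> w i = x i) -> w = x.
Proof.
move=> hS.
have hm : forall w, exists m, w <> x -> exists j, j < m /\ w j <> x j.
  move=> w; case: (pselect (w = x)) => [->|hne]; first by exists 0.
  have [j hj] : exists j, w j <> x j.
    apply/existsNP => H; apply: hne; exact: funext.
  by exists j.+1 => _; exists j.
have [f hf] := choice hm.
have [s hs] := (finite_seqP _).1 (finite_image f hS).
exists (foldr maxn 0 s) => w hw hag; apply: contrapT => hne.
have [j [hj1 hj2]] := hf w hne; apply: hj2; apply: hag.
apply: leq_trans hj1 _; apply: foldr_maxn_ge.
have : (f @` S) (f w) by exists w.
by rewrite hs.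
Qed.

Lemma sub_dir (A : finType) (X : set (nat -> A))
  (hclosed : closed_seqset X)
  (hsurj : (@shift A) @` X = X)
  (hfin : finite_set (Spl X (@shift A))) :
  Spl (Xt X) (sigmat X) `<=` imath X @` Spl X (@shift A).
Proof.
move=> xt [hxt [y1 [y2 [hy1 [hy2 [hne [he1 he2]]]]]]].
have E : forall k d u1 u2, y1 k.+1 d.+1 u1 -> y2 k.+1 d.+1 u2 ->
    kl_equiv X k (k + d.+1) (shift u1) (shift u2).
  move=> k d u1 u2 h1 h2.
  have := sigmat_rep hsurj hy2 h2; rewrite he2 -he1 (sigmat_rep hsurj hy1 h1) => ee.
  have : cls X k (k + d.+1) (shift u2) (shift u2).
    apply: cls_self; exact: (X_shift hsurj (Xt_X hy2 h2)).
  by rewrite -ee => -[].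
have [z1 [z2 [hz1 [hz2 hz12]]]] :
    exists z1 z2, y1 1 0 z1 /\ y2 1 0 z2 /\ z1 0 <> z2 0.
  apply: contrapT => H; apply: hne; apply: funext => k; apply: funext => d.
  have [u1 h1] := Xt_ne hy1 k.+1 d.+1; have [u2 h2] := Xt_ne hy2 k.+1 d.+1.
  rewrite (Xt_cls hy1 (Xt_down hy1 h1 (leqnSn k) (leqnSn d))).
  rewrite (Xt_cls hy2 (Xt_down hy2 h2 (leqnSn k) (leqnSn d))).
  apply: cls_eq.
  have hX1 := Xt_X hy1 h1; have hX2 := Xt_X hy2 h2.
  have [Ec Ep] := (klE _ _ _ _ _).1 (E _ _ _ _ h1 h2).
  have co : forall i, i <= k -> u1 i = u2 i.
    case=> [|i] hi.
      apply: contrapT => hn; apply: H; exists u1, u2; split; last split => //.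
        by apply: (Xt_down hy1 h1).
      by apply: (Xt_down hy2 h2).
    exact: Ec.
  apply/klE; split; first by move=> i hi; apply: co; lia.
  rewrite (shiftn_S k u1) (shiftn_S k u2) co //.
  apply: funext => mu; apply: propext; rewrite !Pcat1 -!shiftn_shift.
  by rewrite -addnS Ep.
have [x [hx hxa]] := Xt_lim hxt hclosed.
have shift_lim : forall yt, Xt X yt -> sigmat X yt = xt -> forall yl,
    (forall k d z i, yt k d z -> i < k -> z i = yl i) -> shift yl = x.
  move=> yt hyt hyte yl hyl; apply: funext => n.
  have [u hu] := Xt_ne hyt n.+2 0.
  rewrite /shift -(hyl _ _ _ _ hu (ltnSn _)).
  have hs : xt n.+1 0 (shift u).
    rewrite -hyte (sigmat_rep hsurj hyt hu); apply: cls_self.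
    exact: (X_shift hsurj (Xt_X hyt hu)).
  exact: hxa hs (ltnSn _).
have [l1 [hl1 hl1a]] := Xt_lim hy1 hclosed.
have [l2 [hl2 hl2a]] := Xt_lim hy2 hclosed.
have hxS : Spl X (@shift A) x.
  split => //; exists l1, l2; split => //; split => //; split.
    by move=> hl; apply: hz12; rewrite (hl1a _ _ _ _ hz1) // (hl2a _ _ _ _ hz2) // hl.
  by split; [apply: shift_lim hy1 he1 _ hl1a | apply: shift_lim hy2 he2 _ hl2a].
have key : forall k d, exists w, xt k d w /\ Spl X (@shift A) w.
  move=> k d.
  have [u1 h1] := Xt_ne hy1 k.+1 d.+1; have [u2 h2] := Xt_ne hy2 k.+1 d.+1.
  have hX1 := Xt_X hy1 h1; have hX2 := Xt_X hy2 h2.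
  have Ek := E _ _ _ _ h1 h2.
  have [Ec Ep] := (klE _ _ _ _ _).1 Ek.
  have hw : X (shift u1) by apply: (X_shift hsurj).
  exists (shift u1); split.
    apply: (Xt_down hxt (k' := k) (d' := d.+1)) => //.
    by rewrite -he1 (sigmat_rep hsurj hy1 h1).
  split => //; exists u1, (wcat [:: u2 0] (shift u1)); split => //; split.
    set s := u2 0 :: mkseq (shift u2) k.
    have hs2 : PP X k.+1 (shiftn k (shift u2)) s.
      split; first by rewrite /= size_mkseq.
      by rewrite /s -cat1s -wcat_cat wcat_shiftn wcat_shift.
    have hs1 : PP X k.+1 (shiftn k (shift u1)) s.
      rewrite (Pdown hsurj (l := k.+1) (l' := k + d.+1) _ _ _ Ep) //.
      - lia.
      - exact: (X_shiftn hsurj k hw).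
      - exact: (X_shiftn hsurj k (X_shift hsurj hX2)).
    move: hs1.
    case=> _; rewrite /s -cat1s -wcat_cat.
    by rewrite -(eq_in_mkseq Ec) wcat_shiftn.
  split; last by rewrite shift_wcat1.
  move=> ee; apply: hz12.
  have a1 : u1 0 = z1 0 by apply: (Xt_agree hy1 h1 hz1).
  have a2 : u2 0 = z2 0 by apply: (Xt_agree hy2 h2 hz2).
  by rewrite -a1 -a2 ee.
exists x => //.
have [K hK] := fin_sep x hfin.
apply: funext => k; apply: funext => d.
have [w [hw hwS]] := key (k + K) d.
have wx : w = x.
  apply: (hK _ hwS) => i hi; apply: (hxa _ _ _ _ hw); lia.
rewrite wx in hw.
by rewrite (Xt_cls hxt (Xt_down hxt hw (leq_addr _ _) (leqnn _))).
Qed.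

Theorem corollary3p3 (A : finType) (X : set (nat -> A))
  (hclosed : closed_seqset X)
  (hsurj : (@shift A) @` X = X)
  (hfin : finite_set (Spl X (@shift A))) :
  Spl (Xt X) (sigmat X) = imath X @` Spl X (@shift A) /\
  Spl (Xt X) (sigmat X) #= Spl X (@shift A).
Proof.
have eq : Spl (Xt X) (sigmat X) = imath X @` Spl X (@shift A).
  apply/seteqP; split; first exact: sub_dir.
  move=> _ [x [hx [x1 [x2 [h1 [h2 [hne [e1 e2]]]]]]] <-].
  split; first exact: imath_Xt.
  exists (imath X x1), (imath X x2); split; first exact: imath_Xt.
  split; first exact: imath_Xt.
  split; first by move=> /(imath_inj h1 h2).
  by rewrite !sigmat_imath // e1 e2.
split => //; rewrite eq; apply: inj_card_eq => a b.
rewrite !in_setE => -[ha _] [hb _]; exact: imath_inj.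
Qed.
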